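(* For every integer $0\le t<(q+1)/d$, the number $l(t,0)$ of polynomials $L\in\mathbb F_{q^2}[X]$ with $\deg L=t$, $\tilde L=L$ and $\gcd(L,X^{(q+1)/d}-1)=1$ equals $$l(t,0)=(q^2-1)\sum_{i=0}^{t-1}(-1)^i\binom{(q+1)/d}{i}q^{t-i-1}+(-1)^t(q-1)\binom{(q+1)/d}{t}.$$
   Context: $q$ is a prime power and $d$ is a positive divisor of $q+1$. For $a\in\mathbb F_{q^2}$, $\bar a=a^q$; for $f(X)=\sum_{i=0}^n a_iX^i\in\mathbb F_{q^2}[X]$ with $a_n\neq0$, $\tilde f(X)=\sum_{i=0}^n\bar a_iX^{n-i}$. *)

(* Defs.v *)
From HB Require Import structures.
From mathcomp Require Import all_boot all_order all_algebra.
Set Implicit Arguments. Unset Strict Implicit. Unset Printing Implicit Defensive.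
Import GRing.Theory.
Local Open Scope ring_scope.

Definition qconj (F : finFieldType) (q : nat) (a : F) : F := a ^+ q.

(* tilde f (X) = sum_{i=0}^n bar(a_i) X^(n-i), n = deg f; i.e. the coefficient
   of X^i in tilde f is bar(a_{n-i}). For f = 0 this gives 0. *)
Definition conj_recip (F : finFieldType) (q : nat) (f : {poly F}) : {poly F} :=
  \poly_(i < size f) qconj q f`_((size f).-1 - i).

(* Polynomials of degree <= t are
   enumerated by their coefficient vectors (a_0,...,a_t). *)
Definition count_l (F : finFieldType) (q m t : nat) : nat :=
  #|[set c : {ffun 'I_t.+1 -> F} |
      let L := \poly_(i < t.+1) c (inord i) in
      [&& size L == t.+1, conj_recip q L == L & coprimep L ('X^m - 1)]]|.

(* Main.v *)
Require Import Defs.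
From HB Require Import structures.
From mathcomp Require Import all_boot all_order all_algebra all_fingroup all_solvable all_field.
From mathcomp Require Import zify ring.
Import GRing.Theory.
Set Implicit Arguments. Unset Strict Implicit. Unset Printing Implicit Defensive.
Local Open Scope ring_scope.

Lemma barD_of (F : finFieldType) (q : nat)
  (hq : exists p k : nat, [/\ prime p, (0 < k)%N & q = (p ^ k)%N])
  (hF : #|F| = (q ^ 2)%N) (a b : F) : (a + b) ^+ q = a ^+ q + b ^+ q.
Proof.
case: hq => p [k [pp k0 qE]]; subst q.
have pc : p \in [pchar F].
  by apply: (@card_finPcharP F p (k * 2)%N) => //; rewrite hF expnM.
apply: (@exprDn_pchar F).
rewrite pnatX; apply/orP; left. by rewrite pnatE.
Qed.

Section S.
Variables (F : finFieldType) (q : nat).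
Hypothesis hF : #|F| = (q ^ 2)%N.
Hypothesis q_gt1 : (1 < q)%N.
Hypothesis barD : forall a b : F, (a + b) ^+ q = a ^+ q + b ^+ q.

Local Notation bar := (qconj q).
Local Notation N := ((q ^ 2).-1)%N.

Lemma bar0 : bar 0 = 0 :> F. Proof. by rewrite /qconj expr0n; case: q q_gt1. Qed.
Lemma barM (a b : F) : bar (a * b) = bar a * bar b. Proof. exact: exprMn. Qed.
Lemma barK (a : F) : bar (bar a) = a.
Proof. by rewrite /qconj -exprM mulnn -hF expf_card. Qed.
Lemma barDD (a b : F) : bar (a + b) = bar a + bar b. Proof. exact: barD. Qed.
Lemma barN (a : F) : bar (- a) = - bar a.
Proof. by apply/eqP; rewrite -subr_eq0 opprK addrC -barDD subrr bar0. Qed.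
Lemma barB (a b : F) : bar (a - b) = bar a - bar b. Proof. by rewrite barDD barN. Qed.
Lemma bar_eq0 (a : F) : (bar a == 0) = (a == 0).
Proof. by rewrite /qconj expf_eq0; case: q q_gt1. Qed.

Lemma N_gt0 : (0 < N)%N.
Proof. rewrite -subn1; apply: (@leq_trans (2 ^ 2 - 1)) => //. apply: leq_sub2r; by rewrite leq_exp2r. Qed.

Lemma NE : N = (q.-1 * q.+1)%N.
Proof. rewrite -!subn1 -addn1. nia. Qed.

Lemma exists_prim : exists g : F, N.-primitive_root g.
Proof.
pose rs := enum [pred x : F | x != 0].
have : has N.-primitive_root rs.
  apply: has_prim_root; first exact: N_gt0.
  - apply/allP => x; rewrite mem_enum inE => x0.
    rewrite unity_rootE; apply/eqP; apply: (mulIf x0).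
    rewrite -exprSr prednK; first by rewrite -hF expf_card mul1r. by rewrite expn_gt0; case: q q_gt1.
  - by rewrite enum_uniq.
  by rewrite -cardE -hF cardC1.
by case/hasP => g _ pg; exists g.
Qed.

Lemma roots_list n : (n %| N)%N -> exists s : seq F,
  [/\ uniq s, size s = n, 'X^n - 1 = \prod_(z <- s) ('X - z%:P)
    & forall z, z \in s -> exists c, c != 0 /\ c ^+ (N %/ n) = z].
Proof.
move=> nN; have [g pg] := exists_prim.
have ph := dvdn_prim_root pg nN.
have n0 := prim_order_gt0 ph.
exists [seq (g ^+ (N %/ n)) ^+ i | i <- iota 0 n]; split.
- rewrite map_inj_in_uniq ?iota_uniq // => i j; rewrite !mem_iota !add0n => ii jj.
  by move/eqP; rewrite (eq_prim_root_expr ph) !modn_small // => /eqP.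
- by rewrite size_map size_iota.
- by rewrite big_map -(factor_Xn_sub_1 ph) /index_iota subn0.
move=> z /mapP [i _ ->]; exists (g ^+ i); split; last by rewrite exprAC.
by rewrite expf_neq0 // (prim_root_eq0 pg) -lt0n N_gt0.
Qed.

Lemma card_fixed : #|[pred x : F | bar x == x]| = q.
Proof.
have dq : (q.-1 %| N)%N by rewrite NE dvdn_mulr.
have [s [us ss sE _]] := roots_list dq.
have s0 : 0 \notin s.
  by rewrite -root_prod_XsubC -sE rootE !hornerE expr0n -subn1 subn_eq0 leqNgt q_gt1 /= sub0r oppr_eq0 oner_eq0.
have -> : #|[pred x : F | bar x == x]| = #|[predU1 0 & s]|.
  apply: eq_card => x; rewrite !inE.
  have [->|x0] := eqVneq x 0; first by rewrite bar0 eqxx.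
  rewrite /= -root_prod_XsubC -sE rootE !hornerE subr_eq0 /qconj.
  rewrite -{1}(prednK (ltnW q_gt1)) exprSr.
  apply/eqP/eqP => [h|->]; last by rewrite mul1r.
  by apply: (mulIf x0); rewrite mul1r.
by rewrite cardU1 s0 (card_uniqP us) ss add1n prednK // ltnW.
Qed.

Lemma surj_norm w : w ^+ q.+1 = 1 -> exists c : F, c != 0 /\ c ^+ q.-1 = w.
Proof.
move=> w1.
have dq : (q.+1 %| N)%N by rewrite NE dvdn_mull.
have [s [us ss sE hs]] := roots_list dq.
have : w \in s by rewrite -root_prod_XsubC -sE rootE !hornerE w1 subrr.
by move/hs; rewrite NE mulnK.
Qed.

Lemma neg1q : (-1 : F) ^+ q = -1.
Proof. by have := barN 1; rewrite /qconj expr1n. Qed.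

Definition P n (c : {ffun 'I_n.+1 -> F}) : {poly F} := \poly_(i < n.+1) c (inord i).
Definition coefs n (p : {poly F}) : {ffun 'I_n.+1 -> F} := [ffun i : 'I_n.+1 => p`_i].

Lemma P_coefs n (p : {poly F}) : (size p <= n.+1)%N -> P (coefs n p) = p.
Proof.
move=> sp; apply/polyP => k; rewrite coef_poly; case: ltnP => kn.
  by rewrite ffunE inordK.
by rewrite nth_default // (leq_trans sp kn).
Qed.

Lemma coefs_P n c : coefs n (P c) = c.
Proof. by apply/ffunP => i; rewrite ffunE coef_poly ltn_ord inord_val. Qed.

Lemma size_P n c : (size (@P n c) <= n.+1)%N.
Proof. exact: size_poly. Qed.

Lemma card_bij n m (Q1 Q2 : pred {poly F}) (h : {poly F} -> {poly F}) :
  injective h ->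
  (forall p, Q1 p -> (size p <= n.+1)%N -> (size (h p) <= m.+1)%N && Q2 (h p)) ->
  (forall p', Q2 p' -> (size p' <= m.+1)%N -> exists2 p, Q1 p && (size p <= n.+1)%N & h p = p') ->
  #|[set c : {ffun 'I_n.+1 -> F} | Q1 (P c)]| = #|[set c : {ffun 'I_m.+1 -> F} | Q2 (P c)]|.
Proof.
move=> hi h1 h2.
pose phi c := coefs m (h (@P n c)).
have -> : [set c : {ffun 'I_m.+1 -> F} | Q2 (P c)] = phi @: [set c | Q1 (P c)].
  apply/setP => c'; rewrite inE; apply/idP/imsetP.
    move=> q2; have [p /andP [q1 sp] hp] := h2 _ q2 (size_P c').
    exists (coefs n p); first by rewrite inE P_coefs.
    by rewrite /phi P_coefs // hp coefs_P.
  move=> [c]; rewrite inE => q1 ->; rewrite /phi.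
  by have /andP [sh q2] := h1 _ q1 (size_P c); rewrite P_coefs.
apply/esym; apply: card_in_imset => c1 c2; rewrite !inE => q1 q2 /(congr1 (@P m)).
have /andP [s1 _] := h1 _ q1 (size_P c1); have /andP [s2 _] := h1 _ q2 (size_P c2).
rewrite !P_coefs // => /hi /(congr1 (coefs n)); by rewrite !coefs_P.
Qed.

Lemma coef_cr (L : {poly F}) k :
  (conj_recip q L)`_k = if (k < size L)%N then bar L`_((size L).-1 - k) else 0.
Proof. by rewrite /conj_recip coef_poly. Qed.

Lemma coefXsubCM (z : F) (M : {poly F}) j :
  (('X - z%:P) * M)`_j = (if j == 0%N then 0 else M`_j.-1) - z * M`_j.
Proof. by rewrite mulrBl coefB coefXM coefCM. Qed.

Lemma size_h (c0 z : F) (M : {poly F}) : c0 != 0 -> M != 0 ->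
  size (c0 *: (('X - z%:P) * M)) = (size M).+1.
Proof.
move=> c00 M0; rewrite size_scale // size_mul ?polyXsubC_eq0 //.
by rewrite size_XsubC.
Qed.

Lemma cr_h (c0 z : F) (M : {poly F}) : c0 != 0 -> M != 0 ->
  bar c0 = - z * c0 -> bar z * z = 1 ->
  conj_recip q (c0 *: (('X - z%:P) * M)) = c0 *: (('X - z%:P) * conj_recip q M).
Proof.
move=> c00 M0 hc hz.
have z0 : z != 0 by apply: contra_eq_neq hz => ->; rewrite mulr0 eq_sym oner_eq0.
have bzE : bar z = z^-1 by apply: (mulIf z0); rewrite hz mulVf.
have n0 : (0 < size M)%N by rewrite size_poly_gt0.
apply/polyP => i; rewrite coef_cr size_h // !coefZ !coefXsubCM !coef_cr /=.
set n := size M.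
have Mn : M`_n = 0 by rewrite nth_default.
case: (ltngtP i n) => [ilt | igt | ->].
- have -> : (i < n.+1)%N by lia.
  have -> : (n - i == 0)%N = false by apply/negbTE; rewrite subn_eq0 -ltnNge.
  case: i ilt => [|i] ilt /=.
    rewrite !subn0 Mn barM barB barM bar0 hc; ring.
  rewrite (leq_trans _ ilt) //.
  have -> : (n - i.+1).-1 = (n.-1 - i.+1)%N by lia.
  have -> : (n - i.+1 = n.-1 - i)%N by lia.
  rewrite barM barB barM hc bzE; field. by [].
- have -> : (i < n.+1)%N = false by lia.
  case: i igt => [|i] igt //=.
  have -> : (i < n)%N = false by lia.
  by rewrite !mulr0 subrr mulr0.
- have -> : (n < n.+1)%N by lia.
  have -> : (n == 0%N) = false by lia.
  have -> : (n.-1 < n)%N by lia.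
  rewrite !subnn eqxx barM barB barM bar0 hc bzE; field; exact: z0.
Qed.

Definition S (s : seq F) t := [set c : {ffun 'I_t.+1 -> F} | let L := P c in
  [&& size L == t.+1, conj_recip q L == L & all (fun z => ~~ root L z) s]].

Lemma S_step0 z s : #|S (z :: s) 0| = #|S s 0|.
Proof.
apply: eq_card => c; rewrite !inE /=.
have [e|] := eqVneq (size (P c)) 1%N => //=.
have -> : ~~ root (P c) z => //.
apply/negP => rz; have nz : P c != 0 by rewrite -size_poly_eq0 e.
by have := root_size_gt1 nz rz; rewrite e ltnn.
Qed.

Lemma root_h (c0 z y : F) (M : {poly F}) : c0 != 0 ->
  root (c0 *: (('X - z%:P) * M)) y = (y == z) || root M y.
Proof.
move=> c00; rewrite !rootE hornerZ hornerM hornerXsubC !mulf_eq0 (negbTE c00).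
by rewrite subr_eq0.
Qed.

Lemma S_step z s t : z ^+ q.+1 = 1 -> z \notin s ->
  #|S s t.+1| = (#|S (z :: s) t.+1| + #|S s t|)%N.
Proof.
move=> z1 zs.
rewrite -(cardID [set c | root (P c) z] (S s t.+1)) addnC.
congr (_ + _)%N.
  apply: eq_card => c; rewrite !inE /=.
  by case: (size _ == _); case: (_ == _); case: (root _ _); case: (all _ _).
have [c0 [c00 hc0]] : exists c0 : F, c0 != 0 /\ c0 ^+ q.-1 = - z.
  apply: surj_norm; rewrite -mulN1r exprMn z1 mulr1 exprSr neg1q.
  by rewrite mulrNN mulr1.
have hc : bar c0 = - z * c0.
  by rewrite /qconj -{1}(prednK (ltnW q_gt1)) exprSr hc0.
have hz : bar z * z = 1 by rewrite /qconj -exprSr.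
pose h M := c0 *: (('X - z%:P) * M).
have hi : injective h.
  move=> M1 M2 /(scalerI c00); apply: mulfI; by rewrite polyXsubC_eq0.
have allh M : all (fun y => ~~ root (h M) y) s = all (fun y => ~~ root M y) s.
  apply: eq_in_all => y ys; rewrite root_h //.
  by have -> : (y == z) = false by apply/negbTE; apply: contraNneq zs => <-.
symmetry.
pose Q1 := (fun M : {poly F} => [&& size M == t.+1, conj_recip q M == M & all (fun z => ~~ root M z) s]).
pose Q2 := (fun L : {poly F} => [&& size L == t.+2, conj_recip q L == L, all (fun z => ~~ root L z) s
       & root L z]).
have -> : S s t = [set c : {ffun 'I_t.+1 -> F} | Q1 (P c)].
  by apply/setP => c; rewrite !inE.
have -> : #|[predI S s t.+1 & [set c | root (P c) z]]| = #|[set c : {ffun 'I_t.+2 -> F} | Q2 (P c)]|.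
  apply: eq_card => c; rewrite !inE /=.
  rewrite /Q2. by case: (size _ == _); case: (_ == _); case: (root _ _); case: (all _ _).
apply: (@card_bij t t.+1 Q1 Q2 h) => //.
  move=> M; rewrite /Q1 => /and3P [/eqP sM /eqP cM aM] _.
  have M0 : M != 0 by rewrite -size_poly_eq0 sM.
  have sh : size (h M) = t.+2 by rewrite size_h // sM.
  have hc' : conj_recip q (h M) = h M by rewrite /h cr_h // cM.
  rewrite /Q2 sh leqnn eqxx /= hc' eqxx /= allh aM /=.
  by rewrite root_h // eqxx.
move=> L; rewrite /Q2 => /and4P [/eqP sL /eqP cL aL rL] _.
have [M0 eL] := factor_theorem _ _ rL.
have hM : h (c0^-1 *: M0) = L.
  by rewrite /h -scalerAr scalerA divff // scale1r mulrC eL.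
have Mn0 : c0^-1 *: M0 != 0.
  by apply: contra_eq_neq sL => e; rewrite -hM e /h mulr0 scaler0 size_poly0.
exists (c0^-1 *: M0) => //.
have sM : size (c0^-1 *: M0) = t.+1.
  by apply/eq_add_S; rewrite -sL -hM size_h.
rewrite /Q1 sM eqxx leqnn andbT /=; apply/andP; split.
  apply/eqP/hi; rewrite hM -{1}cL -hM /h cr_h //.
by rewrite -allh hM.
Qed.

Lemma S_formula s t : uniq s -> (forall z, z \in s -> z ^+ q.+1 = 1) ->
  (#|S s t|)%:Z = \sum_(i < t.+1) (-1) ^+ i * ('C(size s, i))%:Z * (#|S [::] (t - i)|)%:Z.
Proof.
elim: s t => [|z s IH] t us hs.
  rewrite big_ord_recl big1 ?addr0 /=; first by rewrite subn0 mul1r.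
  by move=> i _; rewrite bin0n /= mulr0 mul0r.
move: us => /= /andP [zs us].
have hs' : forall y, y \in s -> y ^+ q.+1 = 1 by move=> y ys; apply: hs; rewrite inE ys orbT.
have z1 : z ^+ q.+1 = 1 by apply: hs; rewrite inE eqxx.
case: t => [|t].
  by rewrite S_step0 IH // !big_ord1 !bin0.
have e := S_step t z1 zs.
have -> : (#|S (z :: s) t.+1|)%:Z = (#|S s t.+1|)%:Z - (#|S s t|)%:Z.
  by rewrite e PoszD addrK.
rewrite !IH // big_ord_recl [in RHS]big_ord_recl !bin0 /=.
rewrite -addrA; congr (_ + _).
rewrite -sumrB; apply: eq_bigr => i _.
rewrite /bump /= !add1n subSS binS PoszD exprS; ring.
Qed.

Lemma sum_lt n t : (\sum_(i < n) (2 * i.+1 < t : nat))%N = minn n ((t.-1) %/ 2).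
Proof.
elim: n => [|n IH]; first by rewrite big_ord0 min0n.
rewrite big_ord_recr IH; case: (ltnP (2 * n.+1) t) => h; rewrite /= ?addn0 ?addn1; lia.
Qed.

Lemma sum_le n t : (\sum_(i < n) (2 * i.+1 <= t : nat))%N = minn n (t %/ 2).
Proof.
elim: n => [|n IH]; first by rewrite big_ord0 min0n.
rewrite big_ord_recr IH; case: (leqP (2 * n.+1) t) => h; rewrite /= ?addn0 ?addn1; lia.
Qed.

Lemma size_Pc t (c : {ffun 'I_t.+1 -> F}) : (size (P c) == t.+1) = (c ord_max != 0).
Proof.
have eo : inord t = ord_max :> 'I_t.+1 by apply: val_inj; rewrite /= inordK.
apply/eqP/idP => [e | h].
  have : lead_coef (P c) != 0 by rewrite lead_coef_eq0 -size_poly_eq0 e.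
  by rewrite /lead_coef e /= coef_poly ltnSn eo.
by apply: size_poly_eq; rewrite /= eo.
Qed.

Lemma scrP t (c : {ffun 'I_t.+1 -> F}) : size (P c) = t.+1 ->
  (conj_recip q (P c) == P c) = [forall i : 'I_t.+1, bar (c (rev_ord i)) == c i].
Proof.
move=> e.
have er (i : 'I_t.+1) : inord (t - i) = rev_ord i by apply: val_inj; rewrite /= inordK; lia.
apply/eqP/forallP => [h i | h].
  have := congr1 (fun p : {poly F} => p`_i) h; rewrite /= coef_cr e ltn_ord /=.
  by rewrite !coef_poly ltn_ord ltnS leq_subr er inord_val => ->.
apply/polyP => k; rewrite coef_cr e /=; case: ltnP => kt.
  have := eqP (h (Ordinal kt)); rewrite !coef_poly ltnS leq_subr kt.
  have -> : inord (t - k) = rev_ord (Ordinal kt) by apply: val_inj; rewrite /= inordK; lia.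
  by rewrite (_ : inord k = Ordinal kt) //; apply: val_inj; rewrite /= inordK.
by rewrite nth_default // (leq_trans (size_P c)).
Qed.

Definition Afam t (i : 'I_t.+1) : pred F := [pred x | ((i != 0 :> nat) || (x != 0)) &&
  (if (2 * i < t)%N then true else if (2 * i == t)%N then bar x == x else x == 0)].

Lemma card_S0_fam t : #|S [::] t| = #|(family (@Afam t) : simpl_pred {ffun 'I_t.+1 -> F})|.
Proof.
pose Phi (g : {ffun 'I_t.+1 -> F}) :=
  [ffun i : 'I_t.+1 => if (2 * i <= t)%N then g i else bar (g (rev_ord i))].
have memS c : (c \in S [::] t) = (c ord_max != 0) && [forall i : 'I_t.+1, bar (c (rev_ord i)) == c i].
  rewrite inE /= andbT -size_Pc; case e: (size (P c) == t.+1) => //=.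
  by rewrite scrP //; apply/eqP.
have rv (i : 'I_t.+1) : nat_of_ord (rev_ord i) = (t - i)%N by rewrite /= subSS.
have -> : S [::] t = Phi @: (family (@Afam t)).
  apply/setP => c; rewrite memS; apply/andP/imsetP.
    move=> [cm /forallP sc].
    pose Psi := [ffun i : 'I_t.+1 => if (2 * i <= t)%N then c i else 0].
    exists Psi.
      apply/familyP => i; rewrite !inE ffunE.
      case: (ltngtP (2 * i) t) => h.
      - rewrite andbT; case: eqP => //= i0.
        have e0 : i = rev_ord ord_max by apply: val_inj => /=; lia.
        by rewrite -(eqP (sc i)) bar_eq0 e0 rev_ordK.
      - by rewrite eqxx andbT orbF; apply/eqP => i0; move: h; rewrite i0; lia.
      - have ei : rev_ord i = i by apply: val_inj => /=; lia.
        have := eqP (sc i); rewrite ei => ->; rewrite eqxx andbT.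
        case: eqP => //= i0; rewrite -(eqP (sc i)) bar_eq0.
        have e0 : i = rev_ord ord_max by apply: val_inj => /=; lia.
        by rewrite {1}e0 rev_ordK.
    apply/ffunP => i; rewrite !ffunE; case: (leqP (2 * i) t) => h //.
    have -> : (2 * rev_ord i <= t)%N by rewrite rv; lia.
    exact/esym/eqP/sc.
  move=> [g /familyP fg ->]; split.
    rewrite ffunE.
    have gm : g (rev_ord ord_max) != 0.
      by have := fg (rev_ord ord_max); rewrite inE rv /= subnn /= => /andP [].
    case: leqP => h; last by rewrite bar_eq0.
    move: h => /= h; have -> : ord_max = rev_ord (@ord_max t) by apply: val_inj => /=; lia.
    by [].
  apply/forallP => i; rewrite !ffunE rev_ordK.
  case: (ltngtP (2 * i) t) => h.
  - have -> : (2 * rev_ord i <= t)%N = false by rewrite rv; lia.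
    by rewrite barK.
  - have -> : (2 * rev_ord i <= t)%N by rewrite rv; lia.
    by [].
  - have ei : rev_ord i = i by apply: val_inj => /=; lia.
    rewrite ei h leqnn.
    by have := fg i; rewrite inE h ltnn eqxx => /andP [].
apply: card_in_imset => g1 g2 /familyP f1 /familyP f2 e.
apply/ffunP => i; have := congr1 (fun f : {ffun 'I_t.+1 -> F} => f i) e; rewrite /= !ffunE.
case: ifP => // h _.
have := f1 i; have := f2 i; rewrite !inE.
have -> : (2 * i < t)%N = false by move/negbT: h; lia.
have -> : (2 * i == t)%N = false by move/negbT: h; lia.
by move=> /andP [_ /eqP ->] /andP [_ /eqP ->].
Qed.

Lemma foldr_prod (T : finType) (f : T -> nat) :
  foldr muln 1%N [seq f x | x : T] = (\prod_(x : T) f x)%N.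
Proof.
rewrite -big_enum /image_mem /=; elim: (enum T) => [|x s IH] /=.
  by rewrite big_nil.
by rewrite big_cons IH.
Qed.

Lemma card_nz : #|[pred x : F | x != 0]| = (q ^ 2).-1.
Proof. by rewrite -hF -(cardC1 (0 : F)); apply: eq_card => x; rewrite !inE. Qed.

Lemma card_fixed_nz : #|[pred x : F | (x != 0) && (bar x == x)]| = q.-1.
Proof.
have e := card_fixed; rewrite (cardD1 0) inE /= bar0 eqxx add1n in e.
suff -> : #|[pred x : F | (x != 0) && (bar x == x)]| = #|[predD1 [pred x : F | bar x == x] & 0]| by move: e; move: #|_| => n <-.
by apply: eq_card => x; rewrite !inE.
Qed.

Lemma card_Afam_i t (i : 'I_t.+1) : #|Afam i| =
  if (i == 0 :> nat) then (if t == 0%N then q.-1 else (q ^ 2).-1)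
  else (q ^ ((2 * i < t : nat) + (2 * i <= t : nat)))%N.
Proof.
case: eqP => i0.
  rewrite /Afam i0 /= muln0.
  case: t i i0 => [|t] i i0 /=.
    by rewrite -card_fixed_nz; apply: eq_card => x; rewrite !inE.
  by rewrite -card_nz; apply: eq_card => x; rewrite !inE andbT.
rewrite /Afam; have i0' : (i == 0 :> nat) = false by apply/eqP.
case: (ltngtP (2 * i) t) => h /=.
- rewrite addn1 -hF; apply: eq_card => x; rewrite !inE. by rewrite i0'.
- rewrite expn0 -(card1 (0 : F)); apply: eq_card => x; rewrite !inE.
  by rewrite i0'.
- rewrite expn1; transitivity #|[pred x : F | bar x == x]|; last exact: card_fixed.
  by apply: eq_card => x; rewrite !inE i0'.
Qed.

Lemma card_S0 t : #|S [::] t| = if t is k.+1 then ((q ^ 2).-1 * q ^ k)%N else q.-1.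
Proof.
rewrite card_S0_fam card_family foldr_prod big_ord_recl card_Afam_i /=.
rewrite (eq_bigr (fun i : 'I_t => q ^ ((2 * i.+1 < t : nat) + (2 * i.+1 <= t : nat))))%N;
  last by move=> i _; rewrite card_Afam_i /=.
rewrite -expn_sum big_split /= sum_lt sum_le.
case: t => [|k] /=; first by rewrite muln1.
congr (_ * q ^ _)%N; lia.
Qed.
End S.

Lemma coprime_all (F : fieldType) (L : {poly F}) (s : seq F) :
  coprimep L (\prod_(z <- s) ('X - z%:P)) = all (fun z => ~~ root L z) s.
Proof.
elim: s => [|z s IH]; first by rewrite big_nil coprimep1.
by rewrite big_cons coprimepMr coprimep_XsubC IH.
Qed.

Unset Implicit Arguments.

Theorem lemma2p5 (F : finFieldType) (q d t : nat)
  (hq : exists p k : nat, [/\ prime p, (0 < k)%N & q = (p ^ k)%N])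
  (hF : #|F| = (q ^ 2)%N)
  (hd0 : (0 < d)%N) (hd : (d %| q.+1)%N)
  (ht : (t < q.+1 %/ d)%N) :
  (count_l F q (q.+1 %/ d) t)%:Z =
    ((q ^ 2)%:Z - 1) *
      \sum_(i < t) (-1) ^+ i * ('C(q.+1 %/ d, i))%:Z * (q ^ (t - i - 1))%:Z
    + (-1) ^+ t * (q%:Z - 1) * ('C(q.+1 %/ d, t))%:Z.
Proof.
have barD := barD_of hq hF.
have q_gt1 : (1 < q)%N.
  case: hq => p [k [pp k0 ->]]; have := prime_gt1 pp.
  case: k k0 => // k _ h; rewrite expnS; have := expn_gt0 p k; rewrite (ltnW h) /=; nia.
set m := (q.+1 %/ d)%N.
have mN : (m %| (q ^ 2).-1)%N.
  rewrite (NE hF q_gt1); apply: dvdn_mull; exact: dvdn_div.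
have [s [us ss sE _]] := roots_list hF q_gt1 mN.
have hs : forall z, z \in s -> z ^+ q.+1 = 1.
  move=> z zs; have : root ('X^m - 1) z by rewrite sE root_prod_XsubC.
  rewrite rootE !hornerE subr_eq0 => /eqP zm.
  by rewrite -(divnK hd) -/m exprM zm expr1n.
have -> : count_l F q m t = #|S q s t|.
  by apply: eq_card => c; rewrite !inE /= sE coprime_all.
rewrite (S_formula hF q_gt1 barD t us hs) ss big_ord_recr /= subnn.
have q20 : (0 < q ^ 2)%N by rewrite expn_gt0; lia.
rewrite mulr_sumr; congr (_ + _).
  apply: eq_bigr => i _.
  have -> : (t - i = (t - i - 1).+1)%N by have := ltn_ord i; lia.
  rewrite (card_S0 hF q_gt1) PoszM predn_int // subSS subn0; ring.
rewrite (card_S0 hF q_gt1) predn_int; [ring | lia].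
Qed.
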